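(* Let $\mathcal I\subseteq\mathbb R$, let $q:\mathcal I\to(0,\infty)$ be a target FDR curve, and for each $i\in[m]$ let $X_i\in\mathcal X_i$ be a test statistic and $p_i:\mathcal X_i\times\mathcal I\to[0,1]$ a p-value function. Assume $X_1,\dots,X_m$ are independent and that $p_i(X_i;c)$ is a valid p-value for $H_{i,c}:\theta_i\ge c$ for all $i\in[m]$, $c\in\mathcal I$. Define $P_{i,\sup}=\sup_{c\in\mathcal I}p_i(X_i;c)/q(c)$, and let $\mathcal S^T$ be the output of the iteration $\mathcal S^1=[m]$, $\mathcal S^{t+1}=\{i\in\mathcal S^t:P_{i,\sup}\le|\mathcal S^t|/m\}$, stopped at the first $T$ with $\mathcal S^{T+1}=\mathcal S^T$ (equivalently, the Benjamini–Hochberg procedure at level 1 applied to $P_{1,\sup},\dots,P_{m,\sup}$). Then $$\sup_{c\in\mathcal I}\frac{\mathrm{FDR}(c)}{q(c)}\le\mathbb E\left[\sup_{c\in\mathcal I}\frac{\sum_{i=1}^m\mathbf 1_{\{H_{i,c}\text{ true}\}}\mathbf 1_{\{i\in\mathcal S^T\}}}{q(c)(1\vee|\mathcal S^T|)}\right]\le1.$$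
   Context: $\theta_1,\dots,\theta_m$ are unknown real parameters. A p-value $P$ is valid for $H_{i,c}$ if $\mathbb P(P\le u)\le u$ for all $u\in[0,1]$ whenever $H_{i,c}$ is true. For $c\in\mathcal I$, $\mathrm{FDR}(c)=\mathbb E\big[\sum_{i=1}^m\mathbf 1_{\{H_{i,c}\text{ true}\}}\mathbf 1_{\{i\in\mathcal S^T\}}/(1\vee|\mathcal S^T|)\big]$. *)

(* Defs.v *)
From HB Require Import structures.
From mathcomp Require Import all_boot all_order all_algebra.
From mathcomp Require Import all_classical all_reals all_analysis measurable_realfun.
Set Implicit Arguments. Unset Strict Implicit. Unset Printing Implicit Defensive.
Import Order.TTheory GRing.Theory Num.Theory.
Local Open Scope classical_set_scope.
Local Open Scope ring_scope.

(* Mutual independence of the family of random elements X_i : Omega -> T_i,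
   i in 'I_m : product rule for every choice of measurable sets A_i
   (taking A_j = setT recovers the rule for every subfamily). *)
Definition mutually_independent (R : realType) (dO : measure_display)
  (Omega : measurableType dO) (P : probability Omega R) (m : nat)
  (d : 'I_m -> measure_display) (T : forall i, measurableType (d i))
  (X : forall i, Omega -> T i) : Prop :=
  forall A : forall i, set (T i), (forall i, measurable (A i)) ->
    P (\bigcap_(i in [set: 'I_m]) (X i @^-1` A i)) =
    (\prod_(i < m) P (X i @^-1` A i))%E.

Definition Psup (R : realType) (I : set R) (q : R -> R) (X : Type)
  (p : X -> R -> R) (x : X) : \bar R :=
  ereal_sup [set ((p x c) / q c)%:E | c in I].

Definition bh_step (R : realType) (m : nat) (P : 'I_m -> \bar R)
  (S : {set 'I_m}) : {set 'I_m} :=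
  [set i in S | (P i <= (#|S|%:R / m%:R)%:E)%E].

(* The sets decrease and
   any strict decrease removes an element, so after m steps the iteration has
   reached its first fixed point S^T (and stays there). *)
Definition bh_output (R : realType) (m : nat) (P : 'I_m -> \bar R) : {set 'I_m} :=
  iter m (bh_step P) (finset.setTfor 'I_m).

Definition fdp (R : realType) (m : nat) (theta : 'I_m -> R) (c : R)
  (S : {set 'I_m}) : R :=
  (\sum_(i < m) (((c <= theta i)%R : bool)%:R * ((i \in S) : bool)%:R)) / Num.max 1 (#|S|%:R).

(* Main.v *)
Require Import Defs.
From HB Require Import structures.
From mathcomp Require Import all_boot all_order all_algebra.
From mathcomp Require Import all_classical all_reals all_analysis measurable_realfun.
From mathcomp Require Import zify ring lra.
Set Implicit Arguments. Unset Strict Implicit. Unset Printing Implicit Defensive.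
Import Order.TTheory GRing.Theory Num.Theory.
Local Open Scope classical_set_scope.
Local Open Scope ring_scope.
Local Close Scope classical_set_scope.
Section Comb.
Variable m : nat.
Implicit Type l : 'I_m -> nat.

Definition stepL l (S : {set 'I_m}) : {set 'I_m} := [set j in S | (l j <= #|S|)%N].
Definition OutL l : {set 'I_m} := iter m (stepL l) [set: 'I_m].
Definition Nc l (r : nat) : nat := #|[set j | (l j <= r)%N]|.

Lemma Nc_mono l r r' : (r <= r')%N -> (Nc l r <= Nc l r')%N.
Proof.
move=> rr; apply: subset_leq_card; apply/fintype.subsetP => j; rewrite !inE => h.
exact: leq_trans h rr.
Qed.

Lemma OutL_inv l t :
  let O := iter t (stepL l) [set: 'I_m] in
  [/\ [set j | (l j <= #|O|)%N] \subset O,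
      (forall r, (#|O| < r <= m)%N -> (Nc l r < r)%N) &
      ((#|O| + t <= m)%N \/ stepL l O = O)].
Proof.
elim: t => [|t [IH1 IH2 IH3]] /=.
  split; first exact: finset.subsetT.
  - by move=> r; rewrite cardsT card_ord => /andP[h1 h2]; have := leq_trans h1 h2; rewrite ltnn.
  - by left; rewrite cardsT card_ord addn0.
set O := iter t (stepL l) [set: 'I_m].
have EO : stepL l O = [set j | (l j <= #|O|)%N].
  apply/finset.setP => j; rewrite !inE; apply/andP/idP => [[]//|h]; split => //.
  by apply: (fintype.subsetP IH1); rewrite inE.
have le1 : (#|stepL l O| <= #|O|)%N.
  by apply: subset_leq_card; apply/fintype.subsetP => j; rewrite inE => /andP[].
split.
- rewrite EO; apply/fintype.subsetP => j; rewrite !inE => h; apply: leq_trans h _.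
  by rewrite -EO.
- move=> r /andP[h1 h2]; have [h3|h3] := ltnP #|O| r.
    by apply: IH2; rewrite h3 h2.
  apply: (leq_ltn_trans (Nc_mono l h3)).
  by rewrite /Nc -EO.
- case: IH3 => [h|h]; last by right; rewrite h h.
  have [e|ne] := eqVneq (stepL l O) O; first by right; rewrite e e.
  left; have : (#|stepL l O| < #|O|)%N.
    apply: proper_card; rewrite finset.properEneq ne /=.
    by apply/fintype.subsetP => j; rewrite inE => /andP[].
  move: h; rewrite -/O => h h'; by rewrite addnS -addSn (leq_trans _ h) // leq_add2r.
Qed.

Lemma OutL_spec l :
  OutL l = [set j | (l j <= #|OutL l|)%N] /\
  (forall r, (#|OutL l| < r <= m)%N -> (Nc l r < r)%N).
Proof.
have [h1 h2 h3] := OutL_inv l m.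
rewrite /OutL; set O := iter m (stepL l) [set: 'I_m] in h1 h2 h3 *.
have fix1 : stepL l O = O.
  case: h3 => // h; have c0 : #|O| = 0%N by lia.
  have -> : O = finset.set0 by apply/eqP; rewrite -cards_eq0 c0.
  by apply/finset.setP => j; rewrite !inE.
split => //.
apply/eqP; rewrite finset.eqEsubset h1 andbT; rewrite -{1}fix1.
by apply/fintype.subsetP => j; rewrite !inE => /andP[].
Qed.

Lemma OutL_size l : #|OutL l| = Nc l #|OutL l|.
Proof. by rewrite /Nc -(OutL_spec l).1. Qed.

Lemma OutL_le l : (#|OutL l| <= m)%N.
Proof. by rewrite -[X in (_ <= X)%N]card_ord max_card. Qed.

Lemma loo l l' i : l' i = 0%N -> (forall j, j != i -> l' j = l j) ->
  (i \in OutL l) = (l i <= #|OutL l'|)%N /\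
  ((i \in OutL l) -> #|OutL l| = #|OutL l'|).
Proof.
move=> li0 lj.
have Nle r : (Nc l r <= Nc l' r)%N.
  apply: subset_leq_card; apply/fintype.subsetP => j; rewrite !inE.
  by have [->|/lj ->] := eqVneq j i; rewrite ?li0.
have Neq r : (l i <= r)%N -> Nc l' r = Nc l r.
  move=> h; rewrite /Nc; apply: eq_card => j; rewrite !inE.
  by have [->|/lj ->] := eqVneq j i; rewrite ?li0 ?h.
have [S1 S2] := OutL_spec l; have [S1' S2'] := OutL_spec l'.
set s := #|OutL l| in S1 S2 *; set s' := #|OutL l'| in S1' S2' *.
have Es : s = Nc l s by rewrite /s {1}OutL_size.
have Es' : s' = Nc l' s' by rewrite /s' {1}OutL_size.
have sm : (s <= m)%N := OutL_le l. have sm' : (s' <= m)%N := OutL_le l'.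
have key1 : (l i <= s)%N -> s = s'.
  move=> h; have [lt|ge] := ltnP s' s.
    have := S2' s; rewrite lt sm => /(_ isT); rewrite Neq // -Es ltnn //.
  have [lt|eq] := ltnP s s'; last by apply/eqP; rewrite eqn_leq eq ge.
  have := S2 s'; rewrite lt sm' => /(_ isT).
  by rewrite -Neq ?(leq_trans h ge) // -Es' ltnn.
have key2 : (l i <= s')%N -> s = s'.
  move=> h; have [lt|ge] := ltnP s s'.
    have := S2 s'; rewrite lt sm' => /(_ isT); rewrite -Neq // -Es' ltnn //.
  have [lt|eq] := ltnP s' s; last by apply/eqP; rewrite eqn_leq eq ge.
  have := S2' s; rewrite lt sm => /(_ isT).
  by move=> h2; have := leq_ltn_trans (Nle s) h2; rewrite -Es ltnn.
have memi : (i \in OutL l) = (l i <= s)%N by rewrite {1}S1 inE.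
split.
  rewrite memi; apply/idP/idP => h; first by rewrite -(key1 h).
  by rewrite (key2 h).
by rewrite memi; exact: key1.
Qed.

Lemma loo_pos l' i : l' i = 0%N -> (0 < #|OutL l'|)%N.
Proof.
move=> h; apply/card_gt0P; exists i.
by rewrite (OutL_spec l').1 inE h.
Qed.

End Comb.
Local Open Scope classical_set_scope.
Section FinSum.
Variable R : realType.
Variable m : nat.
Local Notation V := {ffun 'I_m -> 'I_m.+2}.

Definition upd (l : V) (i : 'I_m) (a : 'I_m.+2) : V :=
  [ffun j => if j == i then a else l j].
Definition natl (l : V) : 'I_m -> nat := fun j => nat_of_ord (l j).
Definition xi (S : {set 'I_m}) (i : 'I_m) : R :=
  ((i \in S) : bool)%:R / Num.max 1 (#|S|%:R).

Lemma factor (pi : 'I_m -> 'I_m.+2 -> R) i (H : 'I_m.+2 -> V -> R) :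
  \sum_(l : V) (\prod_j pi j (l j)) * H (l i) (upd l i ord0) =
  \sum_(a < m.+2) pi i a *
     \sum_(l : V | l i == ord0) (\prod_(j | j != i) pi j (l j)) * H a l.
Proof.
rewrite (partition_big (fun l : V => l i) (fun _ => true)) //=.
apply: eq_bigr => a _.
rewrite (reindex_onto (fun l => upd l i a) (fun l => upd l i ord0)) /=; last first.
  move=> l /eqP li; apply/ffunP => j; rewrite !ffunE.
  by case: eqVneq => [->|//]; rewrite li.
rewrite big_distrr /=; apply: eq_big => l.
  rewrite !ffunE !eqxx /=; apply/eqP/eqP => [h|h].
    by have := congr1 (fun f : V => f i) h; rewrite !ffunE eqxx.
  by apply/ffunP => j; rewrite !ffunE; case: eqVneq => [->|//]; rewrite h.
move=> /andP[_ /eqP e].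
have li : l i = ord0 by have := congr1 (fun f : V => f i) e; rewrite !ffunE eqxx.
have -> : upd (upd l i a) i ord0 = l.
  by apply/ffunP => j; rewrite !ffunE; case: eqVneq => [->|//]; rewrite li.
rewrite (bigD1 i) //= !ffunE eqxx -mulrA; congr (_ * (_ * _)).
by apply: eq_bigr => j /negbTE jn; rewrite ffunE jn.
Qed.

Lemma sum_W (pi : 'I_m -> 'I_m.+2 -> R) i :
  (forall j, \sum_a pi j a = 1) ->
  \sum_(l : V | l i == ord0) (\prod_(j | j != i) pi j (l j)) = 1.
Proof.
move=> h1.
have T1 : \sum_(l : V) \prod_j pi j (l j) = 1.
  by rewrite -bigA_distr_bigA big1 // => j _; exact: h1.
have F := factor pi i (fun _ _ => 1).
rewrite (eq_bigr _ (fun l _ => mulr1 _)) T1 in F.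
rewrite (eq_bigr (fun a => pi i a * \sum_(l : V | l i == ord0) \prod_(j | j != i) pi j (l j))) in F; last first.
  by move=> a _; rewrite (eq_bigr _ (fun l _ => mulr1 _)).
by rewrite -big_distrl /= h1 mul1r in F.
Qed.

Lemma Ei_bound (pi : 'I_m -> 'I_m.+2 -> R) (i : 'I_m) (Q : R) :
  (forall j a, 0 <= pi j a) -> (forall j, \sum_a pi j a = 1) ->
  (forall k, (0 < k <= m)%N -> \sum_(a < m.+2 | (a <= k)%N) pi i a <= Q * k%:R / m%:R) ->
  \sum_(l : V) (\prod_j pi j (l j)) * xi (OutL (natl l)) i <= Q / m%:R.
Proof.
move=> pi0 pi1 piQ.
pose s (l : V) := #|OutL (natl l)|.
pose H (a : 'I_m.+2) (l : V) : R := ((a <= s l)%N : bool)%:R / (s l)%:R.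
have E l : xi (OutL (natl l)) i = H (l i) (upd l i ord0).
  have A1 : natl (upd l i ord0) i = 0%N by rewrite /natl ffunE eqxx.
  have A2 : forall j, j != i -> natl (upd l i ord0) j = natl l j.
    by move=> j jn; rewrite /natl ffunE (negbTE jn).
  have [h1 h2] := loo A1 A2.
  have sp := loo_pos A1.
  have h1' : (i \in OutL (natl l)) = (l i <= s (upd l i ord0))%N := h1.
  rewrite /xi /H -h1'; have [hin|hnin] := boolP (i \in OutL (natl l)); last by rewrite !mul0r.
  by rewrite /s (h2 hin) max_r // ler1n.
under eq_bigr do rewrite E.
rewrite factor.
under eq_bigr do rewrite big_distrr.
rewrite exchange_big /=.
apply: (@le_trans _ _ (\sum_(l : V | l i == ord0) (\prod_(j | j != i) pi j (l j)) * (Q / m%:R))); last first.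
  by rewrite -big_distrl /= sum_W // mul1r.
apply: ler_sum => l /eqP li.
set W := \prod_(j | j != i) pi j (l j).
have W0 : 0 <= W by apply: prodr_ge0 => j _.
have sp : (0 < s l)%N by apply: (@loo_pos _ _ i); rewrite /natl li.
have sm : (s l <= m)%N by exact: OutL_le.
have -> : \sum_a pi i a * (W * H a l) = W / (s l)%:R * \sum_(a < m.+2 | (a <= s l)%N) pi i a.
  rewrite big_distrr /= [RHS]big_mkcond /=; apply: eq_bigr => a _; rewrite /H.
  by case: leqP => _ /=; [rewrite mul1r mulrC | rewrite mul0r !mulr0].
apply: le_trans.
  apply: ler_wpM2l; first by rewrite divr_ge0.
  by apply: piQ; rewrite sp sm.
have sn : (s l)%:R != 0 :> R by rewrite pnatr_eq0 -lt0n.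
have -> : W / (s l)%:R * (Q * (s l)%:R / m%:R) = W * (Q / m%:R).
  have e : (s l)%:R^-1 * (s l)%:R = 1 :> R by rewrite mulVf.
  transitivity (W * (Q / m%:R) * ((s l)%:R^-1 * (s l)%:R)); first ring.
  by rewrite e mulr1.
by [].
Qed.
End FinSum.
Section Lev.
Variable R : realType.
Variable m : nat.

Definition lev (e : \bar R) : nat :=
  \max_(l < m.+1 | ~~ (e <= (l%:R / m%:R)%:E)%E) l.+1.

Lemma lev_le e k : (k <= m)%N ->
  (lev e <= k)%N = (e <= (k%:R / m%:R)%:E)%E.
Proof.
move=> km; apply/bigmax_leqP/idP.
  move=> h; apply/negPn/negP => ne.
  by have := h (Ordinal (km : (k < m.+1)%N)) ne; rewrite ltnn.
move=> he l nl; rewrite ltnNge; apply/negP => kl; move/negP: nl; apply.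
apply: le_trans he _; rewrite lee_fin; apply: ler_wpM2r; first by rewrite invr_ge0.
by rewrite ler_nat.
Qed.

Lemma lev_bound e : (lev e < m.+2)%N.
Proof. by rewrite ltnS; apply/bigmax_leqP => l _; exact: ltn_ord. Qed.

End Lev.

Lemma integral_fin (R : realType) d (Omega : measurableType d)
  (mu : {measure set Omega -> \bar R}) (V : finType) (g : Omega -> V)
  (hg : forall v, measurable (g @^-1` [set v])) (h : V -> \bar R)
  (h0 : forall v, (0 <= h v)%E) :
  (\int[mu]_w h (g w) = \sum_(v : V) h v * mu (g @^-1` [set v]))%E.
Proof.
have E : (fun w => h (g w)) =
    (fun w => \sum_(v : V) (cst (h v) \_ (g @^-1` [set v])) w)%E.
  apply/funext => w; rewrite (bigD1 (g w)) //= big1 ?adde0.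
    by rewrite patchE mem_set.
  move=> v vn; rewrite patchE memNset //=.
  by move=> e; move: vn; rewrite e eqxx.
rewrite E ge0_integral_sum //.
- by apply: eq_bigr => v _; rewrite -integral_mkcond integral_cst.
- by move=> v; apply/(measurable_restrictT _ _).1 => //; exact: measurable_cst.
- by move=> v w _; rewrite patchE; case: ifP => // _; exact: h0.
Qed.
Unset Implicit Arguments.
Section Main.
Variables (R : realType) (dO : measure_display)
  (Omega : measurableType dO) (P : probability Omega R) (m : nat)
  (d : 'I_m -> measure_display) (T : forall i, measurableType (d i))
  (X : forall i, Omega -> T i) (p : forall i, T i -> R -> R)
  (I : set R) (q : R -> R).
Hypothesis hX : forall i, measurable_fun setT (X i).
Hypothesis hsupmeas : forall i, measurable_fun setT (Psup I q (p i) : T i -> \bar R).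

Definition levO j (x : T j) : 'I_m.+2 := inord (lev m (Psup I q (p j) x)).
Definition Bset j (k : nat) : set (T j) := [set x | (lev m (Psup I q (p j) x) <= k)%N].
Definition Aset j (a : 'I_m.+2) : set (T j) := [set x | levO j x = a].
Definition Lw (w : Omega) : {ffun 'I_m -> 'I_m.+2} := [ffun j => levO j (X j w)].
Definition pif j (a : 'I_m.+2) : R := fine (P (X j @^-1` Aset j a)).

Lemma levOE j (x : T j) : (levO j x : nat) = lev m (Psup I q (p j) x).
Proof. by rewrite /levO inordK // lev_bound. Qed.

Lemma mBset j k : measurable (Bset j k).
Proof.
have jm : (0 < m)%N by apply: leq_ltn_trans (ltn_ord j).
have [km|mk] := leqP k m.
  have -> : Bset j k = setT `&` [set x | (Psup I q (p j) x <= cst (k%:R / m%:R)%:E x)%E].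
    apply/seteqP; split => x; rewrite /Bset /= lev_le //.
      by case.
  by apply: measurable_lee => //; exact: measurable_cst.
suff -> : Bset j k = setT by [].
apply/seteqP; split => x //= _.
by rewrite /Bset /=; have := lev_bound m (Psup I q (p j) x); rewrite ltnS => h; apply: leq_trans h _.
Qed.

Lemma mAset j a : measurable (Aset j a).
Proof.
have E1 : Aset j a = [set x | lev m (Psup I q (p j) x) = a :> nat].
  apply/seteqP; split => x /=; rewrite /Aset /= => h.
    by rewrite -levOE h.
  by apply: val_inj; rewrite /= levOE.
rewrite E1; have [a0|apos] := eqVneq (a : nat) 0%N.
  have -> : [set x | lev m (Psup I q (p j) x) = a :> nat] = Bset j 0.
    by apply/seteqP; split => x /=; rewrite /Bset /= a0; lia.
  exact: mBset.
have -> : [set x | lev m (Psup I q (p j) x) = a :> nat] = Bset j a `\` Bset j a.-1.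
  apply/seteqP; split => x /=; rewrite /Bset /=.
    move=> h; split; lia.
  move=> [h1 h2]; lia.
by apply: measurableD; exact: mBset.
Qed.

Lemma mpre j (Y : set (T j)) : measurable Y -> measurable (X j @^-1` Y).
Proof. by move=> mY; have := hX j measurableT _ mY; rewrite setTI. Qed.

Lemma Lw_fiber (l : {ffun 'I_m -> 'I_m.+2}) :
  Lw @^-1` [set l] = \bigcap_(j in [set: 'I_m]) (X j @^-1` Aset j (l j)).
Proof.
apply/seteqP; split => w /=.
  by move=> <- j _; rewrite /Aset /= ffunE.
by move=> h; apply/ffunP => j; rewrite ffunE; exact: h.
Qed.

Lemma mLw l : measurable (Lw @^-1` [set l]).
Proof.
rewrite Lw_fiber; apply: fin_bigcap_measurable; first exact: finite_finset.
by move=> j _; apply: mpre; exact: mAset.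
Qed.

Lemma Lwj_fiber j a : (fun w => Lw w j) @^-1` [set a] = X j @^-1` Aset j a.
Proof. by apply/seteqP; split => w /=; rewrite /Aset /= ffunE. Qed.

Lemma pifE j a : P (X j @^-1` Aset j a) = (pif j a)%:E.
Proof.
rewrite /pif fineK // ge0_fin_numE ?measure_ge0 //.
apply: (le_lt_trans (probability_le1 P (mpre j _ (mAset j a)))); exact: ltey.
Qed.

Lemma pif_ge0 j a : 0 <= pif j a.
Proof. by rewrite /pif fine_ge0 // measure_ge0. Qed.

Lemma mLwj j a : measurable ((fun w => Lw w j) @^-1` [set a]).
Proof. by rewrite Lwj_fiber; apply: mpre; exact: mAset. Qed.

Lemma pif_sum1 j : \sum_a pif j a = 1.
Proof.
have H := @integral_fin R dO Omega P _ (fun w => Lw w j) (mLwj j) (fun _ => 1%E) (fun _ => lee01).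
rewrite integral_cst // in H.
apply: EFin_inj; rewrite -sumEFin.
under eq_bigr do rewrite -pifE -Lwj_fiber -(mul1e (P _)).
rewrite -H mul1e; exact: probability_setT.
Qed.

Lemma PLw (hindep : mutually_independent P X) l :
  P (Lw @^-1` [set l]) = (\prod_j pif j (l j))%:E.
Proof.
rewrite Lw_fiber (hindep (fun j => Aset j (l j))); last by move=> j; exact: mAset.
by rewrite -prodEFin; apply: eq_bigr => j _; exact: pifE.
Qed.

Lemma sum_pif_le i k : (\sum_(a < m.+2 | (a <= k)%N) pif i a)%:E = P (X i @^-1` Bset i k).
Proof.
have H := @integral_fin R dO Omega P _ (fun w => Lw w i) (mLwj i)
   (fun a => ((a <= k)%N : bool)%:R%:E) (fun a => ltac:(by rewrite lee_fin)).
rewrite (eq_integral (fun w => (\1_(X i @^-1` Bset i k) w)%:E)) in H; last first.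
  move=> w _; rewrite indicE ffunE levOE; congr (_%:R%:E).
  rewrite /Bset; congr (nat_of_bool _); apply/idP/idP => [h|]; [exact: mem_set | by move/set_mem].
rewrite integral_indic ?setIT in H; last by apply: mpre; exact: mBset.
rewrite H big_mkcond /= -sumEFin; apply: eq_bigr => a _.
by rewrite Lwj_fiber pifE -EFinM; case: ifP => _; rewrite ?mul1r ?mul0r.
exact: measurableT.
Qed.

Lemma pif_bound i c (Ic : I c) (hqc : 0 < q c)
  (hpm : measurable_fun setT (fun x => p i x c))
  (hv : forall u : R, 0 <= u <= 1 -> (P [set w | (p i (X i w) c <= u)%R] <= u%:E)%E)
  k : (0 < k <= m)%N ->
  \sum_(a < m.+2 | (a <= k)%N) pif i a <= q c * k%:R / m%:R.
Proof.
move=> /andP[k0 km].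
set u := q c * k%:R / m%:R.
have m0 : (0 < m)%N by apply: leq_ltn_trans (ltn_ord i).
have u0 : 0 <= u by rewrite /u divr_ge0 // mulr_ge0 // ltW.
rewrite -lee_fin sum_pif_le.
have mC : measurable [set w | (p i (X i w) c <= u)%R].
  have -> : [set w | (p i (X i w) c <= u)%R] =
      setT `&` [set w | ((p i (X i w) c)%:E <= cst u%:E w)%E].
    by apply/seteqP; split => w /=; rewrite lee_fin //; case.
  apply: measurable_lee => //.
  by apply/measurable_EFinP; exact: (measurableT_comp hpm (hX i)).
apply: (@le_trans _ _ (P [set w | (p i (X i w) c <= u)%R])).
  apply: le_measure; rewrite ?inE //; first by apply: mpre; exact: mBset.
  move=> w; rewrite /Bset /= lev_le // => h.
  have h2 : ((p i (X i w) c / q c)%:E <= Psup I q (p i) (X i w))%E.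
    by apply: ereal_sup_ubound; exists c.
  have := le_trans h2 h; rewrite lee_fin ler_pdivrMr // => h3.
  by rewrite /u (_ : q c * k%:R / m%:R = k%:R / m%:R * q c) //; ring.
have [u1|u1] := leP u 1.
  by apply: hv; rewrite u0 u1.
apply: le_trans (probability_le1 P mC) _.
by rewrite lee_fin ltW.
Qed.

Lemma ST_eq w :
  bh_output (fun i => Psup I q (p i) (X i w)) = OutL (natl (Lw w)).
Proof.
rewrite /bh_output /OutL.
have E : bh_step (fun i => Psup I q (p i) (X i w)) =1 stepL (natl (Lw w)).
  move=> S; apply/finset.setP => j; rewrite !inE; congr (_ && _).
  have jm : (#|S| <= m)%N by rewrite -[X in (_ <= X)%N]card_ord max_card.
  by rewrite /natl ffunE levOE lev_le.
by rewrite (eq_iter E).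
Qed.

End Main.
Local Open Scope ring_scope.
Lemma fdp_ge0 (R : realType) (m : nat) (theta : 'I_m -> R) c (S : {set 'I_m}) :
  0 <= fdp theta c S.
Proof.
rewrite /fdp divr_ge0 //; first by apply: sumr_ge0 => i _; rewrite mulr_ge0.
Qed.

Lemma fdp_sum (R : realType) (m : nat) (theta : 'I_m -> R) c (S : {set 'I_m}) :
  fdp theta c S = \sum_(i < m) (((c <= theta i)%R : bool)%:R * xi R S i).
Proof.
by rewrite /fdp big_distrl /=; apply: eq_bigr => i _; rewrite /xi mulrA.
Qed.

Theorem proposition3 (R : realType) (dO : measure_display)
  (Omega : measurableType dO) (P : probability Omega R) (m : nat)
  (d : 'I_m -> measure_display) (T : forall i, measurableType (d i))
  (X : forall i, Omega -> T i) (p : forall i, T i -> R -> R)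
  (theta : 'I_m -> R) (I : set R) (q : R -> R)
  (hq : forall c, I c -> 0 < q c)
  (hX : forall i, measurable_fun setT (X i))
  (hp01 : forall i x c, I c -> 0 <= p i x c <= 1)
  (hpmeas : forall i c, I c -> measurable_fun setT (fun x => p i x c))
  (hsupmeas : forall i, measurable_fun [set: T i] (Psup I q (p i) : T i -> \bar R))
  (hindep : mutually_independent P X)
  (hvalid : forall i c, I c -> c <= theta i ->
     forall u : R, 0 <= u <= 1 ->
       (P [set w | (p i (X i w) c <= u)%R] <= u%:E)%E) :
  let ST := fun w => bh_output (fun i => Psup I q (p i) (X i w)) in
  (ereal_sup [set ((\int[P]_w (fdp theta c (ST w))%:E) * (q c)^-1%:E)%E | c in I]
     <= \int[P]_w ereal_sup [set ((fdp theta c (ST w)) / q c)%:E | c in I])%E /\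
  (\int[P]_w ereal_sup [set ((fdp theta c (ST w)) / q c)%:E | c in I] <= 1)%E.
Proof.
move=> ST.
pose L := Lw R dO Omega m d T X p I q.
pose pf := pif R dO Omega P m d T X p I q.
have STE w : ST w = OutL (natl (L w)) := ST_eq R dO Omega m d T X p I q w.
have mL := mLw R dO Omega m d T X p I q hX hsupmeas.
have PL := PLw R dO Omega P m d T X p I q hX hsupmeas hindep.
pose G c (l : {ffun 'I_m -> 'I_m.+2}) := fdp theta c (OutL (natl l)).
pose F (l : {ffun 'I_m -> 'I_m.+2}) := ereal_sup [set (G c l / q c)%:E | c in I].
have intG c : (\int[P]_w (fdp theta c (ST w))%:E =
    \sum_l (G c l)%:E * P (L @^-1` [set l]))%E.
  rewrite (eq_integral (fun w => (G c (L w))%:E)); last by move=> w _; rewrite STE.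
  by apply: (integral_fin P mL (h := fun l => (G c l)%:E)) => l; rewrite lee_fin fdp_ge0.
have [[c0 Ic0]|I0] := pselect (exists c, I c); last first.
  have I0' : I = set0 by apply/seteqP; split => c //= Ic; apply: I0; exists c.
  rewrite I0' !image_set0 ereal_sup0; split; first exact: leNye.
  rewrite (eq_integral (fun _ => -oo%E)); last by move=> w _; rewrite image_set0 ereal_sup0.
  rewrite integral_cst // gt0_mulNye ?leNye //.
  have P1 : P setT = 1%E := probability_setT P.
  by have := @lte01 R; rewrite -P1.
have F0 l : (0 <= F l)%E.
  apply: (@le_trans _ _ (G c0 l / q c0)%:E).
    by rewrite lee_fin divr_ge0 ?fdp_ge0 // ltW // hq.
  by apply: ereal_sup_ubound; exists c0.
have intF : (\int[P]_w ereal_sup [set ((fdp theta c (ST w)) / q c)%:E | c in I] =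
    \sum_l F l * P (L @^-1` [set l]))%E.
  rewrite (eq_integral (fun w => F (L w))); last by move=> w _; rewrite /F /G STE.
  exact: (integral_fin P mL (h := F)).
split.
  apply: ge_ereal_sup => y [c Ic <-].
  rewrite intG intF ge0_sume_distrl; last by move=> l _; rewrite mule_ge0 // lee_fin fdp_ge0.
  apply: lee_sum => l _; rewrite muleAC -EFinM.
  apply: lee_wpmul2r; first exact: measure_ge0.
  by apply: ereal_sup_ubound; exists c.
rewrite intF.
pose a i := ereal_sup ([set 0%E] `|` [set (q c)^-1%:E | c in [set c | I c /\ c <= theta i]]).
have a0 i : (0 <= a i)%E by apply: ereal_sup_ubound; left.
have xi0 S i : 0 <= xi R S i by rewrite /xi divr_ge0 // (le_trans ler01) // le_max lexx.
have Fle l : (F l <= \sum_i a i * (xi R (OutL (natl l)) i)%:E)%E.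
  apply: ge_ereal_sup => y [c Ic <-]; rewrite /G fdp_sum big_distrl /= -sumEFin.
  apply: lee_sum => i _; case: (boolP (c <= theta i)) => ci /=.
    rewrite mul1r EFinM muleC; apply: lee_wpmul2r; first by rewrite lee_fin.
    by apply: ereal_sup_ubound; right; exists c.
  by rewrite !mul0r mule_ge0 // lee_fin.
apply: (@le_trans _ _ (\sum_l (\sum_i a i * (xi R (OutL (natl l)) i)%:E) * P (L @^-1` [set l]))%E).
  by apply: lee_sum => l _; apply: lee_wpmul2r => //; exact: measure_ge0.
rewrite (eq_bigr (fun l : {ffun 'I_m -> 'I_m.+2} => \sum_i a i * ((\prod_j pf j (l j)) * xi R (OutL (natl l)) i)%:E)%E); last first.
  move=> l _; rewrite ge0_sume_distrl; last by move=> i _; rewrite mule_ge0 // lee_fin.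
  apply: eq_bigr => i _; rewrite -muleA PL -EFinM mulrC //.
rewrite exchange_big /=.
apply: (@le_trans _ _ (\sum_(i < m) (m%:R^-1)%:E)%E); last first.
  rewrite sumEFin sumr_const card_ord lee_fin.
  have [m0|mpos] := posnP m; first by rewrite m0 mulr0n ler01.
  by rewrite -(mulr_natr (m%:R^-1) m) mulVf // pnatr_eq0 -lt0n.
apply: lee_sum => i _; rewrite -ge0_sume_distrr; last first.
  by move=> l _; rewrite lee_fin mulr_ge0 // prodr_ge0 // => j _; exact: pif_ge0.
rewrite sumEFin.
set E := \sum_l _.
have E0 : 0 <= E by apply: sumr_ge0 => l _; rewrite mulr_ge0 // prodr_ge0 // => j _; exact: pif_ge0.
have mpos : (0 < m)%N by apply: leq_ltn_trans (ltn_ord i).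
have mR : (m%:R : R) != 0 by rewrite pnatr_eq0 -lt0n.
have [Ez|Enz] := eqVneq E 0; first by rewrite Ez mule0 lee_fin invr_ge0 ler0n.
have Ep : 0 < E by rewrite lt_def Enz E0.
have ale : (a i <= ((m%:R * E)^-1)%:E)%E.
  apply: ge_ereal_sup => y [->|[c [Ic ci] <-]].
    by rewrite lee_fin invr_ge0 mulr_ge0.
  have hqc := hq c Ic.
  rewrite lee_fin lef_pV2 ?posrE ?mulr_gt0 ?ltr0n //.
  have := @Ei_bound R m pf i (q c) (pif_ge0 R dO Omega P m d T X p I q)
    (pif_sum1 R dO Omega P m d T X p I q hX hsupmeas)
    (pif_bound R dO Omega P m d T X p I q hX hsupmeas i c Ic hqc (hpmeas i c Ic) (hvalid i c Ic ci)).
  rewrite -/E => h.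
  apply: le_trans (ler_wpM2l (ler0n _ m) h) _.
  by rewrite mulrCA mulfV ?mulr1.
apply: le_trans (lee_wpmul2r _ ale) _; first by rewrite lee_fin.
by rewrite -EFinM lee_fin invfM -mulrA mulVf ?mulr1 // gt_eqF.
Qed.
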